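(* Let $G$ be a finite connected graph and let $2\le k<|V|$. Then the $k$-node CIS relationship graph $G^{(k)}=(C^{(k)},R^{(k)})$ is connected.
   Context: Let $G=(V,E,L)$ be a finite undirected graph with node set $V$, edge set $E$ (unordered pairs of distinct nodes) and a set $L$ of edge labels $l_{i,j}$ attached to edges $(i,j)\in E$ (labels play no role for connectivity). For $V'\subseteq V$, the induced subgraph on $V'$ has node set $V'$ and edge set $\{(i,j)\in E: i,j\in V'\}$ (with the corresponding labels). A $k$-node CIS (connected induced subgraph) is an induced subgraph on a $k$-element set $V'\subseteq V$ that is connected; $C^{(k)}$ denotes the set of all $k$-node CISes of $G$. The $k$-node CIS relationship graph $G^{(k)}=(C^{(k)},R^{(k)})$ is the simple undirected graph whose nodes are the elements of $C^{(k)}$, where two distinct CISes $s_1,s_2\in C^{(k)}$ are adjacent iff their node sets share exactly $k-1$ nodes. *)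

(* Defs.v *)
From mathcomp Require Import all_boot.
Set Implicit Arguments. Unset Strict Implicit. Unset Printing Implicit Defensive.

(* A finite simple undirected graph: node type V : finType, edge relation e,
   assumed symmetric and irreflexive (stated as hypotheses of the theorem).
   Edge labels play no role for connectivity and are omitted. *)

Definition induced_rel (V : finType) (e : rel V) (S : {set V}) : rel V :=
  fun x y => [&& x \in S, y \in S & e x y].

Definition graph_connected (V : finType) (e : rel V) : Prop :=
  forall x y : V, connect e x y.

Definition induced_connected (V : finType) (e : rel V) (S : {set V}) : Prop :=
  forall x y, x \in S -> y \in S -> connect (induced_rel e S) x y.

Definition is_CIS (V : finType) (e : rel V) (k : nat) (S : {set V}) : Prop :=
  #|S| = k /\ induced_connected e S.

Definition CIS_rel (V : finType) (e : rel V) (k : nat) : rel {set V} :=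
  fun A B =>
    [&& #|A| == k,
        [forall x, forall y, (x \in A) ==> (y \in A) ==> connect (induced_rel e A) x y],
        #|B| == k,
        [forall x, forall y, (x \in B) ==> (y \in B) ==> connect (induced_rel e B) x y],
        A != B &
        #|A :&: B| == k.-1].

Definition CIS_graph_connected (V : finType) (e : rel V) (k : nat) : Prop :=
  forall A B : {set V}, is_CIS e k A -> is_CIS e k B -> connect (CIS_rel e k) A B.

(* Main.v *)
Require Import Defs.
From mathcomp Require Import all_boot.
From mathcomp Require Import zify.
Set Implicit Arguments. Unset Strict Implicit. Unset Printing Implicit Defensive.

Lemma crossing (T : finType) (r : rel T) (S : {set T}) x y :
  connect r x y -> x \in S -> y \notin S ->
  exists u v, [/\ u \in S, v \notin S & r u v].
Proof.
move=> /connectP [p Hp ->]; elim: p x Hp => [|z p IH] x /=.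
  by move=> _ ->.
move=> /andP [rxz pz] xS lS.
case zS: (z \in S); first exact: IH pz zS lS.
by exists x, z; rewrite zS.
Qed.

Lemma induced_sym (V : finType) (e : rel V) (S : {set V}) :
  symmetric e -> symmetric (induced_rel e S).
Proof. by move=> es x y; rewrite /induced_rel andbCA es. Qed.

Lemma add_conn (V : finType) (e : rel V) (es : symmetric e) (S : {set V}) u v :
  induced_connected e S -> u \in S -> e u v -> induced_connected e (v |: S).
Proof.
move=> cS uS euv.
have sub : subrel (induced_rel e S) (connect (induced_rel e (v |: S))).
  move=> x y /and3P [hx hy hxy]; apply: connect1; apply/and3P; split=> //;
  by rewrite in_setU1 ?hx ?hy orbT.
have cS' : forall x y, x \in S -> y \in S -> connect (induced_rel e (v |: S)) x y.
  by move=> x y hx hy; apply: (connect_sub sub); apply: cS.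
have cv : forall x, x \in S -> connect (induced_rel e (v |: S)) x v.
  move=> x hx; apply: connect_trans (cS' x u hx uS) _; apply: connect1.
  by rewrite /induced_rel !in_setU1 uS eqxx euv orbT.
have sy := induced_sym (v |: S) es.
move=> x y; rewrite !in_setU1 => /predU1P [->|hx] /predU1P [->|hy].
- exact: connect0.
- by rewrite (sym_connect_sym sy); apply: cv.
- by apply: cv.
- by apply: cS'.
Qed.

Lemma conn_b (V : finType) (e : rel V) (S : {set V}) :
  induced_connected e S ->
  [forall x, forall y, (x \in S) ==> (y \in S) ==> connect (induced_rel e S) x y].
Proof.
move=> cS; apply/forallP => x; apply/forallP => y; apply/implyP => hx; apply/implyP => hy.
exact: cS.
Qed.

Lemma grow (V : finType) (e : rel V) (es : symmetric e) (Gc : graph_connected e) k X :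
  induced_connected e X -> X != set0 -> #|X| <= k -> k <= #|V| ->
  exists Z : {set V}, [/\ X \subset Z, #|Z| = k & induced_connected e Z].
Proof.
move=> cX nX; move: {2}(k - #|X|) (erefl (k - #|X|)) => m.
elim: m X cX nX => [|m IH] X cX nX hm hXk hkV.
  by exists X; split=> //; lia.
case/set0Pn: nX => x0 x0X.
case: (pickP [pred y | y \notin X]) => [y0 hy0 | H]; last first.
  have : X = [set: V].
    apply/eqP; rewrite eqEsubset subsetT /=; apply/subsetP => y _.
    by move: (H y) => /= /negbFE.
  move=> hX; move: hXk hm; rewrite hX cardsT; lia.
have [u [v [uX vX euv]]] := crossing (Gc x0 y0) x0X hy0.
have cX' := add_conn es cX uX euv.
have nX' : v |: X != set0 by apply/set0Pn; exists v; rewrite setU11.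
have hc : #|v |: X| = #|X|.+1 by rewrite cardsU1 vX.
have [Z [XZ kZ cZ]] := IH _ cX' nX' ltac:(lia) ltac:(lia) hkV.
exists Z; split=> //; apply: subset_trans XZ; exact: subsetUr.
Qed.

Lemma ext_in (V : finType) (e : rel V) k (X A : {set V}) :
  X != set0 -> is_CIS e k A -> X \subset A -> #|X| < k ->
  exists a u, [/\ a \in A, a \notin X, u \in X & e u a].
Proof.
move=> nX [kA cA] XA hk.
case/set0Pn: nX => x0 x0X.
have : ~~ (A \subset X).
  apply/negP => /subset_leq_card; lia.
case/subsetPn => a0 a0A a0X.
have [u [a [uX aX /and3P [_ aA eua]]]] :=
  crossing (cA x0 a0 (subsetP XA _ x0X) a0A) x0X a0X.
by exists a, u.
Qed.

Lemma arith1 x y z k : x <= 1 -> y <= 1 -> z.+1 < k -> x + (y + z) <= k.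
Proof. lia. Qed.

Lemma arith2 n z m k : n = z.+1 -> k - z <= m.+1 -> k - n <= m.
Proof. lia. Qed.

Lemma famF (V : finType) (e : rel V) (es : symmetric e) (Gc : graph_connected e)
  k (hkV : k <= #|V|) m :
  forall X, induced_connected e X -> X != set0 -> k - #|X| <= m ->
  forall A B, is_CIS e k A -> is_CIS e k B -> X \subset A -> X \subset B ->
  connect (CIS_rel e k) A B.
Proof.
elim: m => [|m IH] X cX nX hm A B hA hB XA XB;
  case: (leqP k #|X|) => hk.
- have eA : X = A by apply/eqP; rewrite eqEcard XA; case: hA => -> _.
  have eB : X = B by apply/eqP; rewrite eqEcard XB; case: hB => -> _.
  by rewrite -eA -eB connect0.
- lia.
- have eA : X = A by apply/eqP; rewrite eqEcard XA; case: hA => -> _.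
  have eB : X = B by apply/eqP; rewrite eqEcard XB; case: hB => -> _.
  by rewrite -eA -eB connect0.
case: (A =P B) => [-> | neAB]; first exact: connect0.
case: (ltngtP #|X|.+1 k) => hk2; last first.
- apply: connect1.
  have [kA cA] := hA; have [kB cB] := hB.
  have h1 : #|X| <= #|A :&: B| by apply: subset_leq_card; rewrite subsetI XA XB.
  have h2 : #|A :&: B| <= k by rewrite -kA; apply: subset_leq_card; exact: subsetIl.
  have h3 : #|A :&: B| != k.
    apply/eqP => hI.
    have eI : A :&: B = A.
      by apply/eqP; rewrite eqEcard subsetIl /= kA hI leqnn.
    have AB : A \subset B by apply/setIidPl.
    by apply: neAB; apply/eqP; rewrite eqEcard AB kA kB leqnn.
  rewrite /CIS_rel kA kB eqxx (conn_b cA) (conn_b cB).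
  have -> : #|A :&: B| = k.-1 by lia.
  rewrite eqxx andbT /=; exact/eqP.
- lia.
have [a [u [aA aX uX eua]]] := ext_in nX hA XA hk.
have [b [w [bB bX wX ewb]]] := ext_in nX hB XB hk.
have cXa := add_conn es cX uX eua.
have cXb := add_conn es cX wX ewb.
have cY : induced_connected e (b |: (a |: X)).
  apply: (add_conn es cXa _ ewb); by rewrite in_setU1 wX orbT.
have nXa : a |: X != set0 by apply/set0Pn; exists a; rewrite setU11.
have nXb : b |: X != set0 by apply/set0Pn; exists b; rewrite setU11.
have nY : b |: (a |: X) != set0 by apply/set0Pn; exists b; rewrite setU11.
have hY : #|b |: (a |: X)| <= k.
  rewrite cardsU1 cardsU1.
  exact: (arith1 (leq_b1 (b \notin a |: X)) (leq_b1 (a \notin X)) hk2).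
have [C [YC kC cC]] := grow es Gc cY nY hY hkV.
have hC : is_CIS e k C by [].
have XaC : a |: X \subset C.
  apply: subset_trans YC; exact: subsetUr.
have XbC : b |: X \subset C.
  apply: subset_trans YC; apply/subsetP => z; rewrite !in_setU1.
  by case/predU1P => [->|->]; rewrite ?eqxx ?orbT.
have hXa : #|a |: X| = #|X|.+1 by rewrite cardsU1 aX.
have hXb : #|b |: X| = #|X|.+1 by rewrite cardsU1 bX.
apply: connect_trans (IH (a |: X) cXa nXa (arith2 hXa hm) A C hA hC _ XaC) _.
  by apply/subsetP => z; rewrite in_setU1 => /predU1P [->|/(subsetP XA)].
apply: (IH (b |: X) cXb nXb (arith2 hXb hm) C B hC hB XbC).
by apply/subsetP => z; rewrite in_setU1 => /predU1P [->|/(subsetP XB)].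
Qed.

Theorem theorem1 (V : finType) (e : rel V)
  (e_sym : symmetric e) (e_irr : irreflexive e)
  (G_conn : graph_connected e) (k : nat)
  (hk2 : 2 <= k) (hkV : k < #|V|) :
  CIS_graph_connected e k.
Proof.
have hkV' : k <= #|V| by lia.
have F1 : forall x A B, is_CIS e k A -> is_CIS e k B -> x \in A -> x \in B ->
    connect (CIS_rel e k) A B.
  move=> x A B hA hB xA xB.
  apply: (famF e_sym G_conn hkV' (m := k) (X := [set x])) => //.
  - move=> y z; rewrite !in_set1 => /eqP -> /eqP ->; exact: connect0.
  - by apply/set0Pn; exists x; rewrite in_set1.
  - lia.
  - by rewrite sub1set.
  - by rewrite sub1set.
move=> A B hA hB.
have [kA cA] := hA; have [kB cB] := hB.
have [a aA] : exists a, a \in A.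
  case: (set_0Vmem A) => [A0|[a aA]]; last by exists a.
  by move: kA; rewrite A0 cards0; lia.
have [b bB] : exists b, b \in B.
  case: (set_0Vmem B) => [B0|[b bB]]; last by exists b.
  by move: kB; rewrite B0 cards0; lia.
have key : forall p x, (exists E, [/\ is_CIS e k E, x \in E & connect (CIS_rel e k) A E]) ->
   path e x p ->
   exists E, [/\ is_CIS e k E, last x p \in E & connect (CIS_rel e k) A E].
  elim=> [|y p IH] x //= [E [hE xE AE]] /andP [exy py].
  apply: IH py.
  have cxy : induced_connected e [set x; y].
    have c1 : induced_connected e [set x].
      move=> z t; rewrite !in_set1 => /eqP -> /eqP ->; exact: connect0.
    have := add_conn e_sym c1 (set11 x) exy.
    by rewrite setUC.
  have nxy : [set x; y] != set0 by apply/set0Pn; exists x; rewrite !inE eqxx.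
  have hxy : #|[set x; y]| <= k by rewrite cards2; have := leq_b1 (x != y); lia.
  have [C [sC kC cC]] := grow e_sym G_conn cxy nxy hxy hkV'.
  have hC : is_CIS e k C by [].
  have xC : x \in C by apply: (subsetP sC); rewrite !inE eqxx.
  exists C; split=> //; first by apply: (subsetP sC); rewrite !inE eqxx orbT.
  exact: connect_trans AE (F1 x E C hE hC xE xC).
have [p pp eb] := connectP (G_conn a b).
rewrite eb in bB.
have [E [hE bE AE]] := key p a (ex_intro _ A (And3 hA aA (connect0 _ _))) pp.
exact: connect_trans AE (F1 _ E B hE hB bE bB).
Qed.
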